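(* Let $n\ge 1$ be a natural number and let $\Re_{n+1}$ denote the space of real $(n+1)\times(n+1)$ matrices $(a_{ij})$ with indices $0\le i,j\le n$. Then the set $bell(n)\subseteq\Re_{n+1}$ is convex, and $$q(n)\supseteq bell(n)\supseteq c(n).$$
   Context: $bell(n)$ is the set of all $(p_{ij})\in\Re_{n+1}$ such that $p_{00}=1$ and there exist a finite-dimensional Hilbert space $H$, projections $E_1,\dots,E_n,F_1,\dots,F_n$ on $H$, and a density operator (statistical operator) $W$ on $H\otimes H$ with $p_{i0}=\mathrm{tr}[W(E_i\otimes I)]$, $p_{0j}=\mathrm{tr}[W(I\otimes F_j)]$, $p_{ij}=\mathrm{tr}[W(E_i\otimes F_j)]$ for $i,j=1,\dots,n$ ($I$ the identity on $H$). $c(n)$ is the set of all $(p_{ij})\in\Re_{n+1}$ such that $p_{00}=1$ and there exist a probability space $(X,\Sigma,\mu)$ and events $A_1,\dots,A_n,B_1,\dots,B_n\in\Sigma$ with $p_{i0}=\mu(A_i)$, $p_{0j}=\mu(B_j)$, $p_{ij}=\mu(A_i\cap B_j)$ for $i,j=1,\dots,n$. $q(n)$ is the set of all $(p_{ij})\in\Re_{n+1}$ such that $p_{00}=1$ and there exist a Hilbert space $H$, projections $E_1,\dots,E_n,F_1,\dots,F_n$ on $H$ (not necessarily commuting), and a density operator $W$ on $H$ with $p_{i0}=\mathrm{tr}(WE_i)$, $p_{0j}=\mathrm{tr}(WF_j)$, $p_{ij}=\mathrm{tr}[W(E_i\wedge F_j)]$ for $i,j=1,\dots,n$, where $E_i\wedge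 F_j$ is the projection onto $E_i(H)\cap F_j(H)$. *)

(* Defs.v *)
From HB Require Import structures.
From mathcomp Require Import all_boot all_order all_algebra.
From mathcomp Require Import all_classical all_reals.
From mathcomp Require Import ereal measure probability.
From mathcomp Require Import complex mxtens.

Set Implicit Arguments.
Unset Strict Implicit.
Unset Printing Implicit Defensive.

Import Order.TTheory GRing.Theory Num.Theory.
Local Open Scope ring_scope.
Local Open Scope classical_set_scope.

Section Defs.
Variable R : realType.
Local Notation C := R[i].
Definition RtoC (x : R) : C := Complex x 0.

(* Indexing convention: a point of Re_{n+1} is a matrix p : 'M[R]_(n.+1)
   with indices 0..n; the events / projections are indexed by 'I_n, and
   index i : 'I_n (standing for i+1 in 1..n) corresponds to row/column
   [lift ord0 i] of p. *)
Definition idx {n : nat} (i : 'I_n) : 'I_n.+1 := lift ord0 i.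

Definition c_set (n : nat) : set 'M[R]_(n.+1) :=
  [set p | p ord0 ord0 = 1 /\
     exists (d : measure_display) (X : measurableType d) (mu : probability X R)
            (A B : 'I_n -> set X),
       (forall i, measurable (A i)) /\ (forall j, measurable (B j)) /\
       (forall i, mu (A i) = (p (idx i) ord0)%:E) /\
       (forall j, mu (B j) = (p ord0 (idx j))%:E) /\
       (forall i j, mu (A i `&` B j) = (p (idx i) (idx j))%:E)].

(* bell(n): finite-dimensional Hilbert space H = C^m (column vectors),  *)
(* operators on H are m x m complex matrices, H (x) H = C^(m*m) with   *)
(* the Kronecker product [*t] of matrices.                              *)
Definition adjmx {m k : nat} (A : 'M[C]_(m, k)) : 'M[C]_(k, m) :=
  (map_mx Num.conj A)^T.

Definition is_projmx {m : nat} (P : 'M[C]_m) : Prop :=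
  P *m P = P /\ adjmx P = P.

Definition is_densitymx {m : nat} (W : 'M[C]_m) : Prop :=
  adjmx W = W /\
  (forall v : 'cV[C]_m, 0 <= (adjmx v *m W *m v) ord0 ord0) /\
  \tr W = 1.

Definition bell_set (n : nat) : set 'M[R]_(n.+1) :=
  [set p | p ord0 ord0 = 1 /\
     exists (m : nat) (E F : 'I_n -> 'M[C]_m) (W : 'M[C]_(m * m)),
       (forall i, is_projmx (E i)) /\ (forall j, is_projmx (F j)) /\
       is_densitymx W /\
       (forall i, \tr (W *m (E i *t (1%:M : 'M[C]_m))) = RtoC (p (idx i) ord0)) /\
       (forall j, \tr (W *m ((1%:M : 'M[C]_m) *t F j)) = RtoC (p ord0 (idx j))) /\
       (forall i j, \tr (W *m (E i *t F j)) = RtoC (p (idx i) (idx j)))].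

(* q(n): arbitrary (possibly infinite-dimensional, possibly non-       *)
(* separable) complex Hilbert space.                                   *)
Section Hilbert.
Variable H : lmodType C.
Variable ip : H -> H -> C.   (* inner product, linear in 2nd argument *)

Definition hnorm2 (x : H) : C := ip x x.

Definition hcauchy (u : nat -> H) : Prop :=
  forall e : R, 0 < e -> exists N : nat, forall k l : nat,
    (N <= k)%N -> (N <= l)%N -> hnorm2 (u k - u l) < RtoC e.

Definition hconv (u : nat -> H) (x : H) : Prop :=
  forall e : R, 0 < e -> exists N : nat, forall k : nat,
    (N <= k)%N -> hnorm2 (u k - x) < RtoC e.

Definition is_hilbert : Prop :=
  (forall x y z (a : C), ip x (a *: y + z) = a * ip x y + ip x z) /\
  (forall x y, ip y x = Num.conj (ip x y)) /\
  (forall x, 0 <= ip x x) /\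
  (forall x, ip x x = 0 -> x = 0) /\
  (forall u, hcauchy u -> exists x, hconv u x).

Definition is_proj (P : H -> H) : Prop :=
  (forall (a : C) x y, P (a *: x + y) = a *: P x + P y) /\
  (forall x, P (P x) = P x) /\
  (forall x y, ip (P x) y = ip x (P y)).

(* G is the projection E /\ F onto E(H) \cap F(H)
   (the range of a projection is its set of fixed points) *)
Definition is_meet_proj (E F G : H -> H) : Prop :=
  is_proj G /\ forall x, G x = x <-> (E x = x /\ F x = x).

Definition cconv (u : nat -> C) (l : C) : Prop :=
  forall e : R, 0 < e -> exists N : nat, forall k : nat,
    (N <= k)%N -> `|u k - l| < RtoC e.

(* A density operator W written as a countable mixture
     W = sum_k lam_k |psi_k><psi_k|
   with lam_k >= 0, sum_k lam_k = 1, and the psi_k with lam_k <> 0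
   orthonormal (spectral decomposition); the series converges in H. *)
Definition density_decomp (W : H -> H) (psi : nat -> H) (lam : nat -> R) : Prop :=
  (forall k, 0 <= lam k) /\
  cconv (fun N => RtoC (\sum_(k < N) lam k)) 1 /\
  (forall k l, lam k != 0 -> lam l != 0 -> ip (psi k) (psi l) = (k == l)%:R) /\
  (forall x, hconv (fun N => \sum_(k < N) RtoC (lam k) *: (ip (psi k) x *: psi k)) (W x)).

Definition is_density (W : H -> H) : Prop :=
  exists psi lam, density_decomp W psi lam.

(* tr(W A) = t, computed from a decomposition of W
   (tr(W A) = sum_k lam_k <psi_k, A psi_k>; independent of the decomposition) *)
Definition trace_is (W A : H -> H) (t : C) : Prop :=
  exists psi lam, density_decomp W psi lam /\
    cconv (fun N => \sum_(k < N) RtoC (lam k) * ip (psi k) (A (psi k))) t.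

End Hilbert.

Definition q_set (n : nat) : set 'M[R]_(n.+1) :=
  [set p | p ord0 ord0 = 1 /\
     exists (H : lmodType C) (ip : H -> H -> C), is_hilbert ip /\
     exists (E F : 'I_n -> H -> H) (EF : 'I_n -> 'I_n -> H -> H) (W : H -> H),
       (forall i, is_proj ip (E i)) /\ (forall j, is_proj ip (F j)) /\
       (forall i j, is_meet_proj ip (E i) (F j) (EF i j)) /\
       is_density ip W /\
       (forall i, trace_is ip W (E i) (RtoC (p (idx i) ord0))) /\
       (forall j, trace_is ip W (F j) (RtoC (p ord0 (idx j)))) /\
       (forall i j, trace_is ip W (EF i j) (RtoC (p (idx i) (idx j))))].

Definition convex_mxset (n : nat) (S : set 'M[R]_(n.+1)) : Prop :=
  forall p q (t : R), S p -> S q -> 0 <= t -> t <= 1 ->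
    S (t *: p + (1 - t) *: q).

End Defs.

(* Main.v *)
Require Import Defs.
From HB Require Import structures.
From mathcomp Require Import all_boot all_order all_algebra.
From mathcomp Require Import all_classical all_reals.
From mathcomp Require Import ereal measure probability.
From mathcomp Require Import complex mxtens.
From mathcomp Require Import spectral sesquilinear.
From mathcomp Require Import topology normedtype sequences.
From mathcomp Require Import ring lra.
Set Implicit Arguments.
Unset Strict Implicit.
Unset Printing Implicit Defensive.
Import Order.TTheory GRing.Theory Num.Theory.
Import numFieldNormedType.Exports.
Local Open Scope ring_scope.
Local Open Scope classical_set_scope.

Section Helpers.
Variable R : realType.
Local Notation C := R[i].

Lemma RtoCE (x : R) : RtoC x = (x%:C)%C. Proof. by []. Qed.
Lemma conj_RtoC (x : R) : Num.conj (RtoC x) = RtoC x. Proof. exact: conjc_real. Qed.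

Lemma adjmxK m k (A : 'M[C]_(m, k)) : adjmx (adjmx A) = A.
Proof. by apply/matrixP => i j; rewrite !mxE conjCK. Qed.

Lemma adjmxM m k l (A : 'M[C]_(m, k)) (B : 'M[C]_(k, l)) :
  adjmx (A *m B) = adjmx B *m adjmx A.
Proof.
apply/matrixP => i j; rewrite !mxE rmorph_sum; apply: eq_bigr => r _.
by rewrite !mxE rmorphM mulrC.
Qed.

Lemma adjmxD m k (A B : 'M[C]_(m, k)) : adjmx (A + B) = adjmx A + adjmx B.
Proof. by apply/matrixP => i j; rewrite !mxE rmorphD. Qed.

Lemma adjmxZ m k c (A : 'M[C]_(m, k)) : adjmx (c *: A) = Num.conj c *: adjmx A.
Proof. by apply/matrixP => i j; rewrite !mxE rmorphM. Qed.

Lemma adjmx0 m k : adjmx (0 : 'M[C]_(m, k)) = 0.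
Proof. by apply/matrixP => i j; rewrite !mxE rmorph0. Qed.

Lemma adjmx1 m : adjmx (1%:M : 'M[C]_m) = 1%:M.
Proof. by apply/matrixP => i j; rewrite !mxE eq_sym conjC_nat. Qed.

Lemma adjmxT m k p q (A : 'M[C]_(m, k)) (B : 'M[C]_(p, q)) :
  adjmx (A *t B) = adjmx A *t adjmx B.
Proof. by apply/matrixP => i j; rewrite !mxE rmorphM. Qed.

Lemma tensmx11 m p : (1%:M : 'M[C]_m) *t (1%:M : 'M[C]_p) = 1%:M.
Proof.
apply/matrixP => i j; rewrite !mxE.
case: (mxtens_indexP i) => a b; case: (mxtens_indexP j) => c d.
rewrite !mxtens_indexK /=.
have -> : (mxtens_index (a, b) == mxtens_index (c, d)) = (a == c) && (b == d).
  by rewrite (inj_eq (can_inj (@mxtens_indexK _ _))) xpair_eqE.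
by case: (a == c); case: (b == d); rewrite ?mulr1 ?mulr0.
Qed.


Section Convex.
Variables (m1 m2 : nat).
Local Notation M := (m1 + m2)%N.
Definition J1 : 'M[C]_(m1, M) := row_mx 1%:M 0.
Definition J2 : 'M[C]_(m2, M) := row_mx 0 1%:M.

Lemma adjmx_row k l1 l2 (A : 'M[C]_(k, l1)) (B : 'M[C]_(k, l2)) :
  adjmx (row_mx A B) = col_mx (adjmx A) (adjmx B).
Proof. by rewrite /adjmx map_row_mx tr_row_mx. Qed.

Lemma J11 : J1 *m adjmx J1 = 1%:M.
Proof. by rewrite /J1 adjmx_row adjmx1 adjmx0 mul_row_col mul1mx mul0mx addr0. Qed.
Lemma J12 : J1 *m adjmx J2 = 0.
Proof. by rewrite /J1 /J2 adjmx_row adjmx1 adjmx0 mul_row_col mul1mx mul0mx addr0. Qed.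
Lemma J21 : J2 *m adjmx J1 = 0.
Proof. by rewrite /J1 /J2 adjmx_row adjmx1 adjmx0 mul_row_col mul1mx mul0mx add0r. Qed.
Lemma J22 : J2 *m adjmx J2 = 1%:M.
Proof. by rewrite /J2 adjmx_row adjmx1 adjmx0 mul_row_col mul1mx mul0mx add0r. Qed.

Definition emb (P1 : 'M[C]_m1) (P2 : 'M[C]_m2) : 'M[C]_M :=
  adjmx J1 *m P1 *m J1 + adjmx J2 *m P2 *m J2.

Lemma emb1 P1 P2 : J1 *m emb P1 P2 *m adjmx J1 = P1.
Proof.
rewrite /emb mulmxDr mulmxDl !mulmxA J11 J12 mul1mx !mul0mx addr0.
by rewrite -mulmxA J11 mulmx1.
Qed.
Lemma emb2 P1 P2 : J2 *m emb P1 P2 *m adjmx J2 = P2.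
Proof.
rewrite /emb mulmxDr mulmxDl !mulmxA J21 J22 mul1mx !mul0mx add0r.
by rewrite -mulmxA J22 mulmx1.
Qed.

Lemma emb_proj P1 P2 : is_projmx P1 -> is_projmx P2 -> is_projmx (emb P1 P2).
Proof.
move=> [h1 a1] [h2 a2]; split.
  rewrite /emb mulmxDr !mulmxDl !mulmxA.
  rewrite -[_ *m J1 *m adjmx J1]mulmxA J11 mulmx1.
  rewrite -[_ *m J1 *m adjmx J2]mulmxA J12 mulmx0 !mul0mx.
  rewrite -[_ *m J2 *m adjmx J1]mulmxA J21 mulmx0 !mul0mx addr0 add0r.
  rewrite -[_ *m J2 *m adjmx J2]mulmxA J22 mulmx1.
  by rewrite -[adjmx J1 *m P1 *m P1]mulmxA h1 -[adjmx J2 *m P2 *m P2]mulmxA h2.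
rewrite /emb adjmxD !adjmxM !adjmxK a1 a2 !mulmxA. reflexivity.
Qed.

Definition V1 : 'M[C]_(m1 * m1, M * M) := J1 *t J1.
Definition V2 : 'M[C]_(m2 * m2, M * M) := J2 *t J2.

Lemma V11 : V1 *m adjmx V1 = 1%:M.
Proof. by rewrite /V1 adjmxT tensmx_mul J11 tensmx11. Qed.
Lemma V22 : V2 *m adjmx V2 = 1%:M.
Proof. by rewrite /V2 adjmxT tensmx_mul J22 tensmx11. Qed.

Definition mixW (t : R) (W1 : 'M[C]_(m1 * m1)) (W2 : 'M[C]_(m2 * m2)) : 'M[C]_(M * M) :=
  RtoC t *: (adjmx V1 *m W1 *m V1) + RtoC (1 - t) *: (adjmx V2 *m W2 *m V2).

Lemma tr_conj k l (V : 'M[C]_(k, l)) (W : 'M[C]_k) (X : 'M[C]_l) :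
  \tr (adjmx V *m W *m V *m X) = \tr (W *m (V *m X *m adjmx V)).
Proof. by rewrite -!mulmxA mxtrace_mulC !mulmxA. Qed.

Lemma tr_mixW t W1 W2 X :
  \tr (mixW t W1 W2 *m X) =
  RtoC t * \tr (W1 *m (V1 *m X *m adjmx V1)) +
  RtoC (1 - t) * \tr (W2 *m (V2 *m X *m adjmx V2)).
Proof.
by rewrite /mixW mulmxDl !mxtraceD -!scalemxAl !mxtraceZ !tr_conj.
Qed.

Lemma V1_tens (A B : 'M[C]_M) :
  V1 *m (A *t B) *m adjmx V1 = (J1 *m A *m adjmx J1) *t (J1 *m B *m adjmx J1).
Proof. by rewrite /V1 adjmxT !tensmx_mul. Qed.
Lemma V2_tens (A B : 'M[C]_M) :
  V2 *m (A *t B) *m adjmx V2 = (J2 *m A *m adjmx J2) *t (J2 *m B *m adjmx J2).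
Proof. by rewrite /V2 adjmxT !tensmx_mul. Qed.

Lemma J1_1 : J1 *m 1%:M *m adjmx J1 = 1%:M. Proof. by rewrite mulmx1 J11. Qed.
Lemma J2_1 : J2 *m 1%:M *m adjmx J2 = 1%:M. Proof. by rewrite mulmx1 J22. Qed.

Lemma mixW_density t W1 W2 : 0 <= t -> t <= 1 ->
  is_densitymx W1 -> is_densitymx W2 -> is_densitymx (mixW t W1 W2).
Proof.
move=> t0 t1 [a1 [p1 tr1]] [a2 [p2 tr2]]; split; last split.
- by rewrite /mixW adjmxD !adjmxZ !adjmxM !adjmxK a1 a2 !mulmxA !conj_RtoC.
- move=> v; rewrite /mixW mulmxDr mulmxDl -!scalemxAr -!scalemxAl.
  have e1 : adjmx v *m (adjmx V1 *m W1 *m V1) *m v = adjmx (V1 *m v) *m W1 *m (V1 *m v).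
    by rewrite adjmxM !mulmxA.
  have e2 : adjmx v *m (adjmx V2 *m W2 *m V2) *m v = adjmx (V2 *m v) *m W2 *m (V2 *m v).
    by rewrite adjmxM !mulmxA.
  rewrite e1 e2 mxE [_ (RtoC t *: _) _ _]mxE [_ (RtoC (1 - t) *: _) _ _]mxE.
  apply: addr_ge0; apply: mulr_ge0; rewrite ?RtoCE ?ler0c ?subr_ge0 //.
- have := tr_mixW t W1 W2 1%:M; rewrite mulmx1 => ->.
  rewrite !mulmx1 V11 V22 !mulmx1 tr1 tr2 !mulr1 !RtoCE -rmorphD /= addrC subrK.
  by [].
Qed.

End Convex.

Lemma bell_convex n : convex_mxset (@bell_set R n).
Proof.
move=> p q t [p00 [m1 [E1 [F1 [W1 [hE1 [hF1 [hW1 [hA1 [hB1 hAB1]]]]]]]]]]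
  [q00 [m2 [E2 [F2 [W2 [hE2 [hF2 [hW2 [hA2 [hB2 hAB2]]]]]]]]]] t0 t1.
split.
  by rewrite !mxE p00 q00 !mulr1 addrC subrK.
exists (m1 + m2)%N, (fun i => emb (E1 i) (E2 i)), (fun j => emb (F1 j) (F2 j)),
  (mixW t W1 W2).
split; first by move=> i; apply: emb_proj.
split; first by move=> j; apply: emb_proj.
split; first exact: mixW_density.
split; last split.
- move=> i; rewrite tr_mixW V1_tens V2_tens emb1 emb2 J1_1 J2_1 hA1 hA2.
  by rewrite !mxE !RtoCE -!rmorphM -rmorphD.
- move=> j; rewrite tr_mixW V1_tens V2_tens emb1 emb2 J1_1 J2_1 hB1 hB2.
  by rewrite !mxE !RtoCE -!rmorphM -rmorphD.
- move=> i j; rewrite tr_mixW V1_tens V2_tens !emb1 !emb2 hAB1 hAB2.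
  by rewrite !mxE !RtoCE -!rmorphM -rmorphD.
Qed.

End Helpers.


Section Part2.
Variable R : realType.
Local Notation C := R[i].

Lemma sum_tens (V : zmodType) m (G : 'I_m -> 'I_m -> V) :
  \sum_(r < m * m) G (mxtens_unindex r).1 (mxtens_unindex r).2 = \sum_a \sum_b G a b.
Proof.
rewrite pair_bigA (reindex (@mxtens_unindex m m)) //=.
by exists (@mxtens_index m m) => r _; [apply: mxtens_unindexK | apply: mxtens_indexK].
Qed.

Lemma sum_enum (V : zmodType) (T : finType) (g : T -> V) :
  \sum_(a < #|T|) g (enum_val a) = \sum_t g t.
Proof. by rewrite -(big_enum_val g). Qed.


Lemma diag_proj k (v : 'rV[C]_k) : (forall a, v ord0 a * v ord0 a = v ord0 a) ->
  (forall a, Num.conj (v ord0 a) = v ord0 a) -> is_projmx (diag_mx v).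
Proof.
move=> h1 h2; split; apply/matrixP => i j; rewrite ?mul_diag_mx !mxE.
  by case: eqVneq => [->|_]; rewrite ?mulr1n ?mulr0n ?mulr0 ?h1.
by rewrite eq_sym; case: eqVneq => [->|_]; rewrite ?mulr1n ?mulr0n ?h2 ?conjC0.
Qed.

Lemma adj_diag k (v : 'rV[C]_k) :
  (forall a, Num.conj (v ord0 a) = v ord0 a) -> adjmx (diag_mx v) = diag_mx v.
Proof.
move=> h2; apply/matrixP => i j; rewrite !mxE.
by rewrite eq_sym; case: eqVneq => [->|_]; rewrite ?mulr1n ?mulr0n ?h2 ?conjC0.
Qed.

Lemma tr_diag_tens m (w : 'rV[C]_(m * m)) (X Y : 'M[C]_m) :
  \tr (diag_mx w *m (X *t Y)) = \sum_(r < m * m) w ord0 r *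
     (X (mxtens_unindex r).1 (mxtens_unindex r).1 * Y (mxtens_unindex r).2 (mxtens_unindex r).2).
Proof. by rewrite /mxtrace; apply: eq_bigr => r _; rewrite mul_diag_mx !mxE. Qed.

Section Fin.
Variable n : nat.
Local Notation FT := {ffun 'I_n -> bool}.
Local Notation m := #|FT|.
Definition ev (a : 'I_m) : FT := enum_val a.

Lemma sumW (G : FT -> FT -> C) :
  \sum_(r < m * m) G (ev (mxtens_unindex r).1) (ev (mxtens_unindex r).2) =
  \sum_(t : FT * FT) G t.1 t.2.
Proof.
rewrite (sum_tens (fun a b => G (ev a) (ev b))).
under eq_bigr do rewrite (sum_enum (G (ev _))).
rewrite (sum_enum (fun x => \sum_t G x t)).
by rewrite pair_bigA.
Qed.


Lemma sumP (q : FT * FT -> R) (P : pred (FT * FT)) :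
  \sum_(t : FT * FT) RtoC (q (t.1, t.2)) * (P t)%:R = RtoC (\sum_(t | P t) q t).
Proof.
rewrite RtoCE rmorph_sum [RHS]big_mkcond /=; apply: eq_bigr => -[a b] _ /=.
by case: (P (a, b)); rewrite ?mulr1 ?mulr0 ?rmorph0.
Qed.

Definition Eb (i : 'I_n) : 'M[C]_m := diag_mx (\row_a ((ev a) i)%:R).

Definition Wq (q : FT * FT -> R) : 'M[C]_(m * m) :=
  diag_mx (\row_r RtoC (q (ev (mxtens_unindex r).1, ev (mxtens_unindex r).2))).

Lemma Eb_proj i : is_projmx (Eb i).
Proof.
apply: diag_proj => a; rewrite mxE; first by case: (ev a i); rewrite ?mulr1 ?mulr0.
exact: conjC_nat.
Qed.

Lemma Wq_density (q : FT * FT -> R) : (forall t, 0 <= q t) -> \sum_t q t = 1 ->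
  is_densitymx (Wq q).
Proof.
move=> q0 q1; split; last split.
- by apply: adj_diag => a; rewrite mxE conj_RtoC.
- move=> x; rewrite mul_mx_diag mxE; apply: sumr_ge0 => r _; rewrite !mxE.
  rewrite mulrAC mulrC; apply: mulr_ge0; first by rewrite RtoCE ler0c.
  by rewrite mulrC mul_conjC_ge0.
- rewrite mxtrace_diag.
  rewrite (eq_bigr (fun r => (fun a b => RtoC (q (a, b))) (ev (mxtens_unindex r).1) (ev (mxtens_unindex r).2))); last first.
    by move=> r _; rewrite mxE.
  rewrite (sumW (fun a b => RtoC (q (a, b)))).
  have := sumP q predT; under eq_bigr do rewrite mulr1.
  by move=> ->; rewrite q1.
Qed.

Lemma tr_Wq (q : FT * FT -> R) (X Y : 'M[C]_m) (P : pred (FT * FT)) :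
  (forall a b, X a a * Y b b = (P (ev a, ev b))%:R) ->
  \tr (Wq q *m (X *t Y)) = RtoC (\sum_(t | P t) q t).
Proof.
move=> hXY; rewrite tr_diag_tens -sumP.
rewrite (eq_bigr (fun r => (fun a b => RtoC (q (a, b)) * (P (a, b))%:R) (ev (mxtens_unindex r).1) (ev (mxtens_unindex r).2))); last first.
  by move=> r _; rewrite mxE hXY.
rewrite (sumW (fun a b => RtoC (q (a, b)) * (P (a, b))%:R)).
by apply: eq_bigr => -[a b].
Qed.


Lemma Eb_diag i a : Eb i a a = ((ev a) i)%:R.
Proof. by rewrite !mxE eqxx mulr1n. Qed.

Lemma one_diag k (a : 'I_k) : (1%:M : 'M[C]_k) a a = 1.
Proof. by rewrite mxE eqxx. Qed.

Lemma fin_bell (p : 'M[R]_n.+1) (q : FT * FT -> R) :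
  p ord0 ord0 = 1 -> (forall t, 0 <= q t) -> \sum_t q t = 1 ->
  (forall i, p (idx i) ord0 = \sum_(t : FT * FT | t.1 i) q t) ->
  (forall j, p ord0 (idx j) = \sum_(t : FT * FT | t.2 j) q t) ->
  (forall i j, p (idx i) (idx j) = \sum_(t : FT * FT | t.1 i && t.2 j) q t) ->
  bell_set p.
Proof.
move=> p00 q0 q1 hA hB hAB; split => //.
exists m, Eb, Eb, (Wq q).
split; first exact: Eb_proj.
split; first exact: Eb_proj.
split; first exact: Wq_density.
split; last split.
- move=> i; rewrite hA; apply: (@tr_Wq q _ _ (fun t : FT * FT => t.1 i)) => a b.
  by rewrite Eb_diag one_diag mulr1.
- move=> j; rewrite hB; apply: (@tr_Wq q _ _ (fun t : FT * FT => t.2 j)) => a b.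
  by rewrite Eb_diag one_diag mul1r.
- move=> i j; rewrite hAB; apply: (@tr_Wq q _ _ (fun t : FT * FT => t.1 i && t.2 j)) => a b.
  by rewrite !Eb_diag /=; case: (ev a i); case: (ev b j); rewrite ?mulr1 ?mulr0 ?mul0r.
Qed.

End Fin.


Lemma bigI_mem (T : Type) (I : eqType) (r : seq I) (F : I -> set T) x :
  (\big[setI/setT]_(i <- r) F i) x <-> forall i, i \in r -> F i x.
Proof.
elim: r => [|a r IH]; first by rewrite big_nil; split.
rewrite big_cons; split.
  move=> [Fa /IH h] i; rewrite in_cons => /orP[/eqP ->|] //; exact: h.
move=> h; split; first by apply: h; rewrite mem_head.
by apply/IH => i ir; apply: h; rewrite in_cons ir orbT.
Qed.

Section Meas.
Variables (n : nat) (d : measure_display) (X : measurableType d) (mu : probability X R)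
  (A B : 'I_n -> set X).
Hypotheses (mA : forall i, measurable (A i)) (mB : forall j, measurable (B j)).
Local Notation FT := {ffun 'I_n -> bool}.

Definition tau (x : X) : FT * FT := ([ffun i => `[< A i x >]], [ffun j => `[< B j x >]]).
Definition fiber (t : FT * FT) : set X := [set x | tau x = t].

Lemma fiberE t : fiber t = \big[setI/setT]_(i <- enum 'I_n)
  ((if t.1 i then A i else ~` A i) `&` (if t.2 i then B i else ~` B i)).
Proof.
apply/seteqP; split => x.
  rewrite /fiber /= => <-; apply/bigI_mem => i _ /=; rewrite !ffunE; split.
    by case: (asboolP (A i x)).
  by case: (asboolP (B i x)).
move=> /bigI_mem h; rewrite /fiber /=; case: t h => t1 t2 h.
congr pair; apply/ffunP => i; rewrite ffunE; have [h1 h2] := h i (mem_enum _ i).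
  by move: h1 => /=; case: (t1 i) => hx; [apply/asboolT | apply/asboolF].
by move: h2 => /=; case: (t2 i) => hx; [apply/asboolT | apply/asboolF].
Qed.

Lemma fiber_meas t : measurable (fiber t).
Proof.
rewrite fiberE; apply: bigsetI_measurable => i _; apply: measurableI.
  by case: (t.1 i); [exact: mA | exact/measurableC/mA].
by case: (t.2 i); [exact: mB | exact/measurableC/mB].
Qed.

Lemma preim_seq (s : seq (FT * FT)) : uniq s ->
  measurable [set x | tau x \in s] /\ mu [set x | tau x \in s] = (\sum_(t <- s) mu (fiber t))%E.
Proof.
elim: s => [|t s IH] /=.
  have -> : [set x | tau x \in [::]] = set0 by apply/seteqP; split => x.
  by rewrite big_nil measure0.
move=> /andP[ts us]; have [ms hs] := IH us.
have -> : [set x | tau x \in t :: s] = fiber t `|` [set x | tau x \in s].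
  apply/seteqP; split => x /=; rewrite in_cons.
    by case/orP => [/eqP h|h]; [left|right].
  by case => [h|h]; apply/orP; [left; apply/eqP|right].
split; first by apply: measurableU => //; exact: fiber_meas.
rewrite measureU //; first by rewrite big_cons; congr (_ + _)%E; exact: hs.
- exact: fiber_meas.
- apply/seteqP; split => x //= [tx]; rewrite /fiber /= in tx; rewrite tx.
  by move=> ts'; rewrite ts' in ts.
Qed.

Definition qmu (t : FT * FT) : R := fine (mu (fiber t)).

Lemma qmu_ge0 t : 0 <= qmu t.
Proof. by apply: fine_ge0; apply: measure_ge0. Qed.

Lemma mu_pred (U : pred (FT * FT)) :
  mu [set x | U (tau x)] = (\sum_(t | U t) qmu t)%:E.
Proof.
have [_ h] := preim_seq (enum_uniq U).
have -> : [set x | U (tau x)] = [set x | tau x \in enum U].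
  by apply/seteqP; split => x /=; rewrite mem_enum.
rewrite h big_enum /= -sumEFin; apply: eq_bigr => t _.
by rewrite /qmu fineK //; apply: fin_num_measure; exact: fiber_meas.
Qed.

End Meas.

Lemma c_bell n : @c_set R n `<=` @bell_set R n.
Proof.
move=> p [p00 [d [X [mu [A [B [mA [mB [hA [hB hAB]]]]]]]]]].
apply: (@fin_bell n p (qmu mu A B)) => //.
- exact: qmu_ge0.
- have := mu_pred mu mA mB predT.
  have -> : [set x | predT (tau A B x)] = setT by apply/seteqP; split.
  by rewrite probability_setT => /esym/(congr1 fine) /=.
- move=> i; have := mu_pred mu mA mB (fun t => t.1 i).
  have -> : [set x | (tau A B x).1 i] = A i.
    by apply/seteqP; split => x /=; rewrite ffunE => /asboolP.
  by rewrite hA => /(congr1 fine).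
- move=> j; have := mu_pred mu mA mB (fun t => t.2 j).
  have -> : [set x | (tau A B x).2 j] = B j.
    by apply/seteqP; split => x /=; rewrite ffunE => /asboolP.
  by rewrite hB => /(congr1 fine).
- move=> i j; have := mu_pred mu mA mB (fun t => t.1 i && t.2 j).
  have -> : [set x | (tau A B x).1 i && (tau A B x).2 j] = A i `&` B j.
    apply/seteqP; split => x /=; rewrite !ffunE.
      by move=> /andP[/asboolP ? /asboolP ?].
    by move=> [? ?]; apply/andP; split; apply/asboolP.
  by rewrite hAB => /(congr1 fine).
Qed.

End Part2.


Lemma real_complete (R : realType) (a : nat -> R) :
  (forall e, 0 < e -> exists N, forall k l, (N <= k)%N -> (N <= l)%N -> `|a k - a l| < e) ->
  exists L, forall e, 0 < e -> exists N, forall k, (N <= k)%N -> `|a k - L| < e.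
Proof.
move=> ca.
have : cvg (a @ \oo).
  apply/cauchy_cvgP/cauchy_exP => e e0.
  have [N HN] := ca e e0.
  exists (a N); exists N => // k /= Nk.
  by rewrite /ball /= HN.
move=> /cvgrPdist_lt H; exists (lim (a @ \oo)) => e e0.
have [N _ HN] := H e e0; exists N => k Nk.
by rewrite distrC; apply: HN.
Qed.

Section Part3.
Variable R : realType.
Local Notation C := R[i].

Definition cip N (x y : 'cV[C]_N) : C := (adjmx x *m y) ord0 ord0.

Lemma conjzz (z : C) : Num.conj z * z = ((complex.Re z) ^+ 2 + (complex.Im z) ^+ 2)%:C%C.
Proof.
case: z => a b /=; apply/eqP; rewrite eq_complex /=; apply/andP; split; apply/eqP.
  by ring.
by ring.
Qed.

Local Notation Rec := complex.Re.
Local Notation Imc := complex.Im.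

Definition ns N (x : 'cV[C]_N) : R :=
  \sum_r ((Rec (x r ord0)) ^+ 2 + (Imc (x r ord0)) ^+ 2).

Lemma cip_self N (x : 'cV[C]_N) : cip x x = ((ns x)%:C)%C.
Proof.
rewrite /cip /ns mxE rmorph_sum; apply: eq_bigr => r _.
by rewrite !mxE conjzz.
Qed.

Lemma ns_ge0 N (x : 'cV[C]_N) : 0 <= ns x.
Proof. by apply: sumr_ge0 => r _; apply: addr_ge0; apply: sqr_ge0. Qed.

Lemma ns_coord N (x : 'cV[C]_N) r :
  (Rec (x r ord0)) ^+ 2 + (Imc (x r ord0)) ^+ 2 <= ns x.
Proof.
rewrite /ns (bigD1 r) //= lerDl; apply: sumr_ge0 => s _.
by apply: addr_ge0; apply: sqr_ge0.
Qed.

Lemma ns_eq0 N (x : 'cV[C]_N) : ns x = 0 -> x = 0.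
Proof.
move=> /psumr_eq0P h; apply/matrixP => r j; rewrite ord1 mxE.
have := h (fun s _ => addr_ge0 (sqr_ge0 _) (sqr_ge0 _)) r isT.
move: (x r ord0) => [a b] /= /eqP.
rewrite paddr_eq0 ?sqr_ge0 // !sqrf_eq0 => /andP[/eqP -> /eqP ->].
by [].
Qed.

Lemma ReB (a b : C) : Rec (a - b) = Rec a - Rec b. Proof. by case: a; case: b. Qed.
Lemma ImB (a b : C) : Imc (a - b) = Imc a - Imc b. Proof. by case: a; case: b. Qed.

Lemma sq_lt_abs (y e : R) : 0 < e -> y ^+ 2 < e ^+ 2 -> `|y| < e.
Proof. by move=> e0; have [y0|y0] := ger0P y => h; nra. Qed.

Lemma conv_sq (a : nat -> R) L :
  (forall e, 0 < e -> exists N, forall k, (N <= k)%N -> `|a k - L| < e) ->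
  forall e, 0 < e -> exists N, forall k, (N <= k)%N -> (a k - L) ^+ 2 < e.
Proof.
move=> h e e0; have m0 : 0 < Num.min 1 e by rewrite lt_min ltr01 e0.
have [N HN] := h _ m0; exists N => k /HN; rewrite lt_min => /andP[h1 h2].
move: (a k - L) h1 h2 => y; have [y0|y0] := ger0P y => h1 h2; nra.
Qed.

Lemma cip_complete n : forall u : nat -> 'cV[C]_n, hcauchy (@cip n) u -> exists x, hconv (@cip n) u x.
Proof.
move=> u cu.
have cu' : forall e, 0 < e -> exists N, forall k l, (N <= k)%N -> (N <= l)%N ->
    ns (u k - u l) < e.
  move=> e e0; have [N HN] := cu e e0; exists N => k l Nk Nl.
  by have := HN k l Nk Nl; rewrite /hnorm2 cip_self RtoCE ltcR.
have cre : forall r : 'I_n, exists L, forall e, 0 < e -> exists N, forall k, (N <= k)%N ->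
    `|Rec (u k r ord0) - L| < e.
  move=> r; apply: real_complete => e e0.
  have [N HN] := cu' (e ^+ 2) (exprn_gt0 2 e0); exists N => k l Nk Nl.
  apply: sq_lt_abs => //; apply: le_lt_trans (HN k l Nk Nl).
  apply: le_trans (ns_coord _ r); rewrite !mxE ReB lerDl; exact: sqr_ge0.
have cim : forall r : 'I_n, exists L, forall e, 0 < e -> exists N, forall k, (N <= k)%N ->
    `|Imc (u k r ord0) - L| < e.
  move=> r; apply: real_complete => e e0.
  have [N HN] := cu' (e ^+ 2) (exprn_gt0 2 e0); exists N => k l Nk Nl.
  apply: sq_lt_abs => //; apply: le_lt_trans (HN k l Nk Nl).
  apply: le_trans (ns_coord _ r); rewrite !mxE ImB lerDr; exact: sqr_ge0.
have [La hLa] := choice cre.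
have [Lb hLb] := choice cim.
exists (\col_r (Complex (La r) (Lb r))) => e e0.
set q : R := (n.+1)%:R.
have q0 : 0 < q by rewrite ltr0n.
set c := e / q / 2.
have c0 : 0 < c by rewrite divr_gt0 // divr_gt0.
have hr : forall r : 'I_n, exists N, forall k, (N <= k)%N ->
    (Rec (u k r ord0) - La r) ^+ 2 < c /\ (Imc (u k r ord0) - Lb r) ^+ 2 < c.
  move=> r; have [N1 H1] := conv_sq (hLa r) c0; have [N2 H2] := conv_sq (hLb r) c0.
  exists (maxn N1 N2) => k; rewrite geq_max => /andP[k1 k2]; split.
    exact: H1. exact: H2.
have [f hf] := choice hr.
exists (\max_r f r) => k Nk.
rewrite /hnorm2 cip_self RtoCE ltcR.
have -> : ns (u k - \col_r (Complex (La r) (Lb r))) =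
    \sum_r ((Rec (u k r ord0) - La r) ^+ 2 + (Imc (u k r ord0) - Lb r) ^+ 2).
  by apply: eq_bigr => r _; rewrite !mxE ReB ImB.
apply: (@le_lt_trans _ _ (\sum_(r < n) (c + c))).
  apply: ler_sum => r _; have [h1 h2] := hf r k (leq_trans (leq_bigmax r) Nk).
  by apply: lerD; apply: ltW.
rewrite sumr_const card_ord -mulr_natr.
have -> : c + c = e / q by rewrite /c; field.
rewrite mulrAC ltr_pdivrMr // ltr_pM2l // /q ltr_nat //.
Qed.

Lemma cip_hilbert n : is_hilbert (@cip n).
Proof.
split; last split; last split; last split.
- move=> x y z a; rewrite /cip mulmxDr -scalemxAr mxE.
  by rewrite [X in X + _ = _]mxE.
- move=> x y; rewrite /cip; have := adjmxM (adjmx x) y; rewrite adjmxK => <-.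
  by rewrite !mxE.
- by move=> x; rewrite cip_self ler0c ns_ge0.
- move=> x; rewrite cip_self => /(congr1 (@complex.Re R)) /= h; exact: ns_eq0.
- exact: (@cip_complete n).
Qed.


Definition opM n (A : 'M[C]_n) : 'cV[C]_n -> 'cV[C]_n := fun x => A *m x.

Lemma opM_proj n (A : 'M[C]_n) : is_projmx A -> is_proj (@cip n) (opM A).
Proof.
move=> [h a]; split; last split.
- by move=> c x y; rewrite /opM mulmxDr scalemxAr.
- by move=> x; rewrite /opM mulmxA h.
- by move=> x y; rewrite /opM /cip adjmxM a mulmxA.
Qed.

Lemma tens_proj m k (A : 'M[C]_m) (B : 'M[C]_k) :
  is_projmx A -> is_projmx B -> is_projmx (A *t B).
Proof.
move=> [h1 a1] [h2 a2]; split; first by rewrite tensmx_mul h1 h2.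
by rewrite adjmxT a1 a2.
Qed.

Lemma one_proj m : is_projmx (1%:M : 'M[C]_m).
Proof. by split; rewrite ?mulmx1 ?adjmx1. Qed.

Lemma meet_tens m (A B : 'M[C]_m) : is_projmx A -> is_projmx B ->
  is_meet_proj (@cip (m * m)) (opM (A *t 1%:M)) (opM (1%:M *t B)) (opM (A *t B)).
Proof.
move=> hA hB; split; first exact/opM_proj/tens_proj.
have [h1 _] := hA; have [h2 _] := hB.
move=> x; rewrite /opM; split.
  move=> hx; split.
    by rewrite -{1}hx mulmxA tensmx_mul h1 mul1mx hx.
  by rewrite -{1}hx mulmxA tensmx_mul h2 mul1mx hx.
move=> [ha hb].
have -> : A *t B = (A *t 1%:M) *m (1%:M *t B) by rewrite tensmx_mul mulmx1 mul1mx.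
by rewrite -mulmxA hb ha.
Qed.

Lemma sum_insub (V : zmodType) n K (F : nat -> V) (g : 'I_n -> V) : (n <= K)%N ->
  (forall k, F k = oapp g 0 (insub k)) -> \sum_(k < K) F k = \sum_(i < n) g i.
Proof.
move=> nK hF; rewrite -(big_mkord xpredT F) (@big_cat_nat _ _ _ n 0 K _ _ (leq0n n) nK) /=.
rewrite [X in _ + X]big1_seq ?addr0; last first.
  move=> k /andP[_]; rewrite mem_index_iota => /andP[nk _].
  by rewrite hF insubF // ltnNge nk.
rewrite big_mkord; apply: eq_bigr => i _; by rewrite hF valK.
Qed.

Lemma row_adj_row m k (A B : 'M[C]_(m, k)) i j :
  (row i A *m adjmx (row j B)) ord0 ord0 = (A *m adjmx B) i j.
Proof. by rewrite !mxE; apply: eq_bigr => s _; rewrite !mxE. Qed.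

Lemma adjE m k (A : 'M[C]_(m, k)) : (A ^t* )%sesqui = adjmx A.
Proof. by rewrite /adjmx map_trmx. Qed.

Lemma ge0_RtoC (z : C) : 0 <= z -> RtoC (Rec z) = z.
Proof. by case: z => a b; rewrite lecE /= => /andP[/eqP -> _]. Qed.

Lemma ge0_Re (z : C) : 0 <= z -> 0 <= Rec z.
Proof. by case: z => a b; rewrite lecE /= => /andP[_]. Qed.

Lemma trWX_gen n (Q : 'M[C]_n) (D : 'rV[C]_n) (X : 'M[C]_n) :
  \tr ((adjmx Q *m diag_mx D *m Q) *m X) =
  \sum_(i < n) D ord0 i * (row i Q *m X *m adjmx (row i Q)) ord0 ord0.
Proof.
rewrite -!mulmxA mxtrace_mulC -!mulmxA mul_diag_mx /mxtrace.
apply: eq_bigr => i _; rewrite mxE; congr (_ * _).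
by rewrite -row_mul row_adj_row !mulmxA.
Qed.

Lemma Wx_gen n (Q : 'M[C]_n) (D : 'rV[C]_n) (x : 'cV[C]_n) :
  (adjmx Q *m diag_mx D *m Q) *m x =
  \sum_(i < n) D ord0 i *: (cip (adjmx (row i Q)) x *: adjmx (row i Q)).
Proof.
apply/matrixP => r c; rewrite ord1 summxE -mulmxA mul_mx_diag mxE.
apply: eq_bigr => i _; rewrite /cip adjmxK -row_mul /adjmx !mxE.
rewrite mulrC [RHS]mulrC -mulrA; congr (_ * _); rewrite mulrC; congr (_ * _).
Qed.

Section Density.
Variables (n : nat) (W : 'M[C]_n).
Hypothesis hW : is_densitymx W.

Lemma W_herm : W \is hermsymmx.
Proof.
apply/is_hermitianmxP; rewrite expr0 scale1r -map_trmx.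
by have [a _] := hW; rewrite -[LHS]a.
Qed.

Lemma W_spec_ex : exists (Q : 'M[C]_n) (D : 'rV[C]_n),
  Q *m adjmx Q = 1%:M /\ W = adjmx Q *m diag_mx D *m Q.
Proof.
have U := spectral_unitarymx W.
have /orthomx_spectralP h := hermitian_normalmx W_herm.
move: U h; move: (spectralmx W) (spectral_diag W) => Q D U h.
exists Q, D; split.
  by rewrite -adjE; apply/unitarymxP.
by rewrite -adjE -invmx_unitary.
Qed.

End Density.

Lemma d_ge0 n (Q : 'M[C]_n) (D : 'rV[C]_n) :
  Q *m adjmx Q = 1%:M -> is_densitymx (adjmx Q *m diag_mx D *m Q) ->
  forall i, 0 <= D ord0 i.
Proof.
move=> hQ [_ [hp _]] i.
have := hp (adjmx (row i Q)); rewrite adjmxK.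
have -> : row i Q *m (adjmx Q *m diag_mx D *m Q) *m adjmx (row i Q) = 
   (row i (Q *m adjmx Q)) *m diag_mx D *m adjmx (row i (Q *m adjmx Q)).
  by rewrite !row_mul adjmxM adjmxK !mulmxA.
rewrite hQ row1.
suff -> : (('e_i : 'rV[C]_n) *m diag_mx D *m adjmx ('e_i : 'rV[C]_n)) ord0 ord0 = D ord0 i by [].
rewrite mul_mx_diag mxE (bigD1 i) //= big1 ?addr0 => [|j ji]; rewrite !mxE.
  by rewrite !eqxx /= mul1r conjC1 mulr1.
by rewrite (negbTE ji) andbF mul0r mul0r.
Qed.

Lemma trd n (Q : 'M[C]_n) (D : 'rV[C]_n) :
  Q *m adjmx Q = 1%:M -> is_densitymx (adjmx Q *m diag_mx D *m Q) ->
  \sum_(i < n) D ord0 i = 1.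
Proof.
move=> hQ [_ [_ h1]].
have := trWX_gen Q D 1%:M; rewrite mulmx1 h1 => ->.
apply: eq_bigr => i _.
by rewrite mulmx1 row_adj_row hQ mxE eqxx mulr1.
Qed.

Section Decomp.
Variables (n : nat) (Q : 'M[C]_n) (D : 'rV[C]_n).
Hypothesis hQ : Q *m adjmx Q = 1%:M.
Hypothesis hD : forall i, 0 <= D ord0 i.
Hypothesis htr : \sum_(i < n) D ord0 i = 1.
Local Notation W := (adjmx Q *m diag_mx D *m Q).

Definition psi (k : nat) : 'cV[C]_n := oapp (fun i => adjmx (row i Q)) 0 (insub k).
Definition lam (k : nat) : R := oapp (fun i => Rec (D ord0 i)) 0 (insub k).

Lemma RtoC_lam i : RtoC (Rec (D ord0 i)) = D ord0 i.
Proof. exact/ge0_RtoC/hD. Qed.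

Lemma decomp : density_decomp (@cip n) (opM W) psi lam.
Proof.
split; last split; last split.
- by move=> k; rewrite /lam; case: insub => [i|] //=; apply/ge0_Re/hD.
- move=> e e0; exists n => K nK /=.
  rewrite (@sum_insub _ n K _ (fun i => Rec (D ord0 i))) //.
  have -> : RtoC (\sum_(i < n) Rec (D ord0 i)) = \sum_(i < n) D ord0 i.
    rewrite RtoCE rmorph_sum; apply: eq_bigr => i _; exact: RtoC_lam.
  by rewrite htr subrr normr0 RtoCE ltcR.
- move=> k l; rewrite /lam /psi.
  case: insubP => [i _ ki|_] /=; last by rewrite eqxx.
  case: insubP => [j _ lj|_] /=; last by rewrite eqxx.
  move=> _ _.
  by rewrite /cip adjmxK row_adj_row hQ mxE -ki -lj.
- move=> x e e0; exists n => K nK /=.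
  have -> : \sum_(k < K) RtoC (lam k) *: (cip (psi k) x *: psi k) = W *m x.
    rewrite Wx_gen; apply: (@sum_insub _ n K (fun k => RtoC (lam k) *: (cip (psi k) x *: psi k))) => // k.
    by rewrite /psi /lam; case: insub => [i|] //=; rewrite ?RtoC_lam // ?scaler0 // ?scale0r.
  rewrite /opM subrr /hnorm2 cip_self /ns big1 => [|r _]; rewrite ?RtoCE ?ltcR //.
  by rewrite !mxE /= expr0n /= addr0.
Qed.

Lemma trace_isW (X : 'M[C]_n) : trace_is (@cip n) (opM W) (opM X) (\tr (W *m X)).
Proof.
exists psi, lam; split; first exact: decomp.
move=> e e0; exists n => K nK /=.
have -> : \sum_(k < K) RtoC (lam k) * cip (psi k) (opM X (psi k)) =
    \sum_(i < n) D ord0 i * (row i Q *m X *m adjmx (row i Q)) ord0 ord0.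
  apply: (@sum_insub _ n K (fun k => RtoC (lam k) * cip (psi k) (opM X (psi k)))) => // k.
  rewrite /psi /lam; case: insub => [i|] //=; rewrite ?RtoC_lam ?mul0r //.
  by rewrite /cip /opM adjmxK mulmxA.
by rewrite -trWX_gen subrr normr0 RtoCE ltcR.
Qed.

End Decomp.

Lemma bell_q n : @bell_set R n `<=` @q_set R n.
Proof.
move=> p [p00 [m [E [F [W [hE [hF [hW [hA [hB hAB]]]]]]]]]].
split => //.
exists 'cV[C]_(m * m), (@cip (m * m)); split; first exact: cip_hilbert.
exists (fun i => opM (E i *t 1%:M)), (fun j => opM (1%:M *t F j)),
  (fun i j => opM (E i *t F j)), (opM W).
have [Q [D [hQ hWe]]] := W_spec_ex hW.
subst W.
have hd := d_ge0 hQ hW; have ht := trd hQ hW.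
split; first by move=> i; apply/opM_proj/tens_proj => //; exact: one_proj.
split; first by move=> j; apply/opM_proj/tens_proj => //; exact: one_proj.
split; first by move=> i j; apply: meet_tens.
split; first by exists (psi Q), (lam D); apply: decomp.
split; first by move=> i; rewrite -hA; apply: trace_isW.
split; first by move=> j; rewrite -hB; apply: trace_isW.
by move=> i j; rewrite -hAB; apply: trace_isW.
Qed.

End Part3.

Theorem theorem1 (R : realType) (n : nat) (hn : (1 <= n)%N) :
  @convex_mxset R n (@bell_set R n) /\
  @c_set R n `<=` @bell_set R n /\
  @bell_set R n `<=` @q_set R n.
Proof.
split; first exact: bell_convex.
split; first exact: c_bell.
exact: bell_q.
Qed.
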